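(* Consider the DF-SSQP algorithm described in the context and suppose (A1) holds. For each $k$ decompose $\tilde\Delta x_k=u_k+v_k$ with $u_k\in\mathrm{Null}(\tilde G_k)$ and $v_k\in\mathrm{Range}(\tilde G_k^T)$. Then there exist constants $\kappa_v,\kappa_u,\kappa_q>0$ such that for all $k\ge0$: (a) $\max\{\|v_k\|,\|v_k\|^2\}\le\kappa_v\|c_k\|$; (b) if $\|u_k\|^2\ge\kappa_u\|v_k\|^2$, then $\tilde\Delta x_k^T\tilde B_k\tilde\Delta x_k\ge0.5\,\kappa_{1,\tilde B}\|u_k\|^2$; (c) $\Delta q(\tilde\Delta x_k;\tau_k,x_k,\bar g_k,\tilde B_k)\ge\kappa_q\tau_k(\|\tilde\Delta x_k\|^2+\|c_k\|)$.
   Context: Problem and notation. Let $\mathcal P$ be a probability distribution on a sample space, $F(\cdot;\xi):\mathbb R^d\to\mathbb R$ for each sample $\xi$, $f(x)=\mathbb E_{\xi\sim\mathcal P}[F(x;\xi)]$, and $c:\mathbb R^d\to\mathbb R^m$. The problem is $\min_{x\in\mathbb R^d} f(x)$ subject to $c(x)=0$. Let $G(x)=\nabla c(x)\in\mathbb R^{m\times d}$ denote the constraint Jacobian, $c^j$ the $j$-th component of $c$, and $\mathcal L(x,\lambda)=f(x)+\lambda^Tc(x)$ the Lagrangian. A subscript $k$ denotes evaluation at the iterate $x_k$: $f_k=f(x_k)$, $\nabla f_k=\nabla f(x_k)$, $c_k=c(x_k)$, $G_k=G(x_k)$. For a vector $v$ with nonzero entries, $v^j$ is its $j$-th entry, $v^{-1}$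 is the entrywise reciprocal and $v^{-T}=(v^{-1})^T$. Norms are Euclidean norms for vectors and operator norms for matrices. Algorithm (DF-SSQP). Inputs: $(x_0,\lambda_0)\in\mathbb R^d\times\mathbb R^m$, $\bar g_{-1}\in\mathbb R^d$, $\bar G_{-1}\in\mathbb R^{m\times d}$, $\bar B_{-1}=I$, $\tau_{-1},\nu_{-1}>0$; positive sequences $\{b_k\},\{\tilde b_k\},\{\alpha_k\},\{\beta_k\}$; parameters $\sigma,\epsilon\in(0,1)$, $\psi\ge0$, $p\ge1$; positive constants $\kappa_{\nabla f},\kappa_{\nabla c}$ (Lipschitz constants of $\nabla f$ and $\nabla c$); a distribution $\mathcal P_\Delta$ on $\mathbb R^d$. For $k=0,1,2,\dots$: (1) Draw $\xi_k\sim\mathcal P$ and two independent directions $\Delta_k,\tilde\Delta_k\sim\mathcal P_\Delta$. (2) Gradient estimates: $\hat\nabla F(x_k;\xi_k)=\frac{F(x_k+b_k\Delta_k;\xi_k)-F(x_k-b_k\Delta_k;\xi_k)}{2b_k}\Delta_k^{-1}$ and $\hat\nabla c(x_k)=\frac{c(x_k+b_k\Delta_k)-c(x_k-b_k\Delta_k)}{2b_k}\Delta_k^{-T}\in\mathbb R^{m\times d}$; averages $\bar g_k=(1-\beta_k)\bar g_{k-1}+\beta_k\hat\nabla F(x_k;\xi_k)$, $\bar G_k=(1-\beta_k)\bar G_{k-1}+\beta_k\hat\nabla c(x_k)$. (3) Hessian estimates: for each sign $\pm$, $\tilde\nabla F(x_k\pm b_k\Delta_k;\xi_k)=\frac{F(x_k\pm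 b_k\Delta_k+\tilde b_k\tilde\Delta_k;\xi_k)-F(x_k\pm b_k\Delta_k;\xi_k)}{\tilde b_k}\tilde\Delta_k^{-1}$ and $\tilde\nabla c(x_k\pm b_k\Delta_k)=\frac{c(x_k\pm b_k\Delta_k+\tilde b_k\tilde\Delta_k)-c(x_k\pm b_k\Delta_k)}{\tilde b_k}\tilde\Delta_k^{-T}$; $\tilde\nabla c^j$ is the transpose of the $j$-th row of $\tilde\nabla c$; $\delta\tilde\nabla F_k=\tilde\nabla F(x_k+b_k\Delta_k;\xi_k)-\tilde\nabla F(x_k-b_k\Delta_k;\xi_k)$, $\delta\tilde\nabla c^j_k=\tilde\nabla c^j(x_k+b_k\Delta_k)-\tilde\nabla c^j(x_k-b_k\Delta_k)$; $\hat\nabla^2F(x_k;\xi_k)=\frac12\big[\frac{\delta\tilde\nabla F_k}{2b_k}\Delta_k^{-T}+\Delta_k^{-1}\frac{(\delta\tilde\nabla F_k)^T}{2b_k}\big]$ and $\hat\nabla^2c^j_k=\frac12\big[\frac{\delta\tilde\nabla c^j_k}{2b_k}\Delta_k^{-T}+\Delta_k^{-1}\frac{(\delta\tilde\nabla c^j_k)^T}{2b_k}\big]$, $1\le j\le m$. (4) $\tilde G_k=\bar G_k+\delta_k^G$ with $\delta_k^G$ a perturbation making $\tilde G_k$ of full row rank; $\bar\nabla_x\mathcal L_k=\bar g_k+\tilde G_k^T\lambda_k$; $\hat\nabla_x^2\mathcal L_k=\hat\nabla^2F(x_k;\xi_k)+\sum_{j=1}^m\lambda_k^j\hat\nabla^2c^j_k$;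 $\bar B_k=(1-\beta_k)\bar B_{k-1}+\beta_k\hat\nabla_x^2\mathcal L_k$; $\tilde B_k=\bar B_k+\delta_k^B$ with $\delta_k^B$ a perturbation making $\tilde B_k$ positive definite on $\ker\tilde G_k$. (5) Solve $\tilde W_k\binom{\tilde\Delta x_k}{\tilde\Delta\lambda_k}=-\binom{\bar\nabla_x\mathcal L_k}{c_k}$, where $\tilde W_k=\begin{pmatrix}\tilde B_k&\tilde G_k^T\\ \tilde G_k&0\end{pmatrix}$. (6) With $\Delta q(d;\tau,x_k,\bar g_k,\tilde B_k)=-\tau(\bar g_k^Td+\tfrac12\max\{d^T\tilde B_kd,0\})+\|c_k\|$: let $s_k=\bar g_k^T\tilde\Delta x_k+\max\{\tilde\Delta x_k^T\tilde B_k\tilde\Delta x_k,0\}$; $\tau_k^{trial}=\infty$ if $s_k\le0$, else $\tau_k^{trial}=(1-\sigma)\|c_k\|/s_k$; $\tau_k=\tau_{k-1}$ if $\tau_{k-1}\le\tau_k^{trial}$, else $\tau_k=(1-\epsilon)\tau_k^{trial}$. Let $\nu_k^{trial}=\Delta q(\tilde\Delta x_k;\tau_k,x_k,\bar g_k,\tilde B_k)/\|\tilde\Delta x_k\|^2$; $\nu_k=\nu_{k-1}$ if $\nu_{k-1}\le\nu_k^{trial}$, else $\nu_k=(1-\epsilon)\nu_k^{trial}$. (7) Pick any (random) stepsize $\bar\alpha_k$ with $\frac{\nu_k\alpha_k}{\tau_k\kappa_{\nabla f}+\kappa_{\nabla c}}\le\bar\alpha_k\le\frac{\nu_k\alpha_k}{\tau_k\kappa_{\nabla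 f}+\kappa_{\nabla c}}+\psi\alpha_k^p$, and set $(x_{k+1},\lambda_{k+1})=(x_k,\lambda_k)+\bar\alpha_k(\tilde\Delta x_k,\tilde\Delta\lambda_k)$. Assumption (A1): There is an open convex set $\mathcal X\subseteq\mathbb R^d$ containing all points $x_k$, $x_k\pm b_k\Delta_k$, $x_k\pm b_k\Delta_k+\tilde b_k\tilde\Delta_k$; $f$ and $c$ are thrice differentiable with bounded first, second and third derivatives on $\mathcal X$; $f$ is bounded below on $\mathcal X$; there are constants $\kappa_c,\kappa_{1,G},\kappa_{2,G},\kappa_{1,\tilde G},\kappa_{2,\tilde G}>0$ with $\|c_k\|\le\kappa_c$, $\kappa_{1,G}I\preceq G_kG_k^T\preceq\kappa_{2,G}I$, $\kappa_{1,\tilde G}I\preceq\tilde G_k\tilde G_k^T\preceq\kappa_{2,\tilde G}I$ for all $k\ge0$; and constants $\kappa_{1,\tilde B},\kappa_{2,\tilde B}>0$ with $x^T\tilde B_kx\ge\kappa_{1,\tilde B}\|x\|^2$ for all $x$ with $\tilde G_kx=0$ and $\|\tilde B_k\|\le\kappa_{2,\tilde B}$. *)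

(* Defs.v *)
From HB Require Import structures.
From mathcomp Require Import all_boot all_order all_algebra.
From mathcomp Require Import all_classical all_reals all_analysis.
Set Implicit Arguments. Unset Strict Implicit. Unset Printing Implicit Defensive.
Import Order.TTheory GRing.Theory Num.Theory.
Import numFieldNormedType.Exports.
Local Open Scope classical_set_scope.
Local Open Scope ring_scope.

Definition dotv (R : realType) (n : nat) (u v : 'cV[R]_n) : R := (u^T *m v) 0 0.
Definition enorm (R : realType) (n : nat) (v : 'cV[R]_n) : R := Num.sqrt (dotv v v).

Definition opnorm_le (R : realType) (m n : nat) (A : 'M[R]_(m, n)) (K : R) : Prop :=
  forall u : 'cV[R]_n, enorm (A *m u) <= K * enorm u.

Definition loewner_le (R : realType) (n : nat) (A B : 'M[R]_n) : Prop :=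
  forall w : 'cV[R]_n, dotv w (A *m w) <= dotv w (B *m w).

Definition quadf (R : realType) (n : nat) (B : 'M[R]_n) (v : 'cV[R]_n) : R := dotv v (B *m v).

Definition vinv (R : realType) (n : nat) (v : 'cV[R]_n) : 'cV[R]_n := map_mx (fun a => a^-1) v.

(** Constraint Jacobian G(x) = \nabla c(x) in R^{m x d}, from MathComp-Analysis' jacobian
    (which is stated for row vectors and gives the d x m matrix of the differential). *)
Definition cjac (R : realType) (d m : nat) (c : 'cV[R]_d -> 'cV[R]_m) (x : 'cV[R]_d)
  : 'M[R]_(m, d) := (jacobian (fun r : 'rV[R]_d => (c r^T)^T) x^T)^T.

(** Value at index k-1, with the initial value at k = 0 (index -1). *)
Definition prev (T : Type) (init : T) (s : nat -> T) (k : nat) : T :=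
  if k is k'.+1 then s k' else init.

Definition convex_setR (R : realType) (d : nat) (X : set 'cV[R]_d) : Prop :=
  forall a b : 'cV[R]_d, forall t : R, X a -> X b -> 0 <= t -> t <= 1 ->
    X ((1 - t) *: a + t *: b).

Definition Dq (R : realType) (d m : nat) (c : 'cV[R]_d -> 'cV[R]_m)
  (dd : 'cV[R]_d) (tau : R) (x : 'cV[R]_d) (g : 'cV[R]_d) (B : 'M[R]_d) : R :=
  - tau * (dotv g dd + 2^-1 * Num.max (quadf B dd) 0) + enorm (c x).

Section Estimators.
Variables (R : realType) (d m : nat) (Xi : Type).
Variables (F : Xi -> 'cV[R]_d -> R) (c : 'cV[R]_d -> 'cV[R]_m).

Definition gradF_hat (xi : Xi) (x : 'cV[R]_d) (b : R) (D : 'cV[R]_d) : 'cV[R]_d :=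
  ((F xi (x + b *: D) - F xi (x - b *: D)) / (2 * b)) *: vinv D.
Definition gradc_hat (x : 'cV[R]_d) (b : R) (D : 'cV[R]_d) : 'M[R]_(m, d) :=
  (2 * b)^-1 *: ((c (x + b *: D) - c (x - b *: D)) *m (vinv D)^T).

Definition gradF_tilde (xi : Xi) (y : 'cV[R]_d) (bt : R) (Dt : 'cV[R]_d) : 'cV[R]_d :=
  ((F xi (y + bt *: Dt) - F xi y) / bt) *: vinv Dt.
Definition gradc_tilde (y : 'cV[R]_d) (bt : R) (Dt : 'cV[R]_d) : 'M[R]_(m, d) :=
  bt^-1 *: ((c (y + bt *: Dt) - c y) *m (vinv Dt)^T).

Definition sym_hess (dv : 'cV[R]_d) (b : R) (D : 'cV[R]_d) : 'M[R]_d :=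
  2^-1 *: (((2 * b)^-1 *: dv) *m (vinv D)^T + vinv D *m ((2 * b)^-1 *: dv^T)).

Definition hessF_hat (xi : Xi) (x : 'cV[R]_d) (b bt : R) (D Dt : 'cV[R]_d) : 'M[R]_d :=
  sym_hess (gradF_tilde xi (x + b *: D) bt Dt - gradF_tilde xi (x - b *: D) bt Dt) b D.

Definition hessc_hat (j : 'I_m) (x : 'cV[R]_d) (b bt : R) (D Dt : 'cV[R]_d) : 'M[R]_d :=
  sym_hess ((row j (gradc_tilde (x + b *: D) bt Dt))^T
            - (row j (gradc_tilde (x - b *: D) bt Dt))^T) b D.

Definition hessL_hat (xi : Xi) (x : 'cV[R]_d) (lam : 'cV[R]_m) (b bt : R)
  (D Dt : 'cV[R]_d) : 'M[R]_d :=
  hessF_hat xi x b bt D Dt + \sum_(j < m) lam j 0 *: hessc_hat j x b bt D Dt.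
End Estimators.

(** A realization of the DF-SSQP algorithm: given the inputs and the realized
    samples xi_k and directions Delta_k, tDelta_k, the sequences
    x, lam, gbar, Gbar, Bbar, Gt (= tilde G), Bt (= tilde B), dx, dlam,
    tau, nu, abar satisfy steps (1)-(7). *)
Definition DFSSQP_run (R : realType) (d m : nat) (Xi : Type)
  (F : Xi -> 'cV[R]_d -> R) (c : 'cV[R]_d -> 'cV[R]_m)
  (x0 : 'cV[R]_d) (lam0 : 'cV[R]_m) (g_init : 'cV[R]_d) (G_init : 'M[R]_(m, d))
  (tau_init nu_init : R) (b bt alpha beta : nat -> R)
  (sigma eps psi p kf kc : R)
  (xi : nat -> Xi) (D Dt : nat -> 'cV[R]_d)
  (x : nat -> 'cV[R]_d) (lam : nat -> 'cV[R]_m)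
  (gbar : nat -> 'cV[R]_d) (Gbar : nat -> 'M[R]_(m, d)) (Bbar : nat -> 'M[R]_d)
  (Gt : nat -> 'M[R]_(m, d)) (Bt : nat -> 'M[R]_d)
  (dx : nat -> 'cV[R]_d) (dlam : nat -> 'cV[R]_m)
  (tau nu abar : nat -> R) : Prop :=
      ((0 < sigma < 1) /\ (0 < eps < 1) /\ 0 <= psi /\ 1 <= p /\ 0 < kf /\ 0 < kc) /\
      (0 < tau_init /\ 0 < nu_init) /\
      (forall k, [/\ 0 < b k, 0 < bt k, 0 < alpha k & 0 < beta k]) /\
      (x 0%N = x0 /\ lam 0%N = lam0) /\
      (* directions with nonzero entries (so that Delta^{-1} is defined) *)
      (forall k i, D k i 0 != 0 /\ Dt k i 0 != 0) /\
      (forall k, gbar k = (1 - beta k) *: prev g_init gbar k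
                          + beta k *: gradF_hat F (xi k) (x k) (b k) (D k)
              /\ Gbar k = (1 - beta k) *: prev G_init Gbar k
                          + beta k *: gradc_hat c (x k) (b k) (D k)) /\
      (forall k, Bbar k = (1 - beta k) *: prev 1%:M Bbar k
                          + beta k *: hessL_hat F c (xi k) (x k) (lam k) (b k) (bt k) (D k) (Dt k)) /\
      (forall k, row_free (Gt k)
              /\ (forall u : 'cV[R]_d, Gt k *m u = 0 -> u != 0 -> 0 < quadf (Bt k) u)) /\
      (forall k, block_mx (Bt k) (Gt k)^T (Gt k) 0 *m col_mx (dx k) (dlam k)
                 = - col_mx (gbar k + (Gt k)^T *m lam k) (c (x k))) /\
      (forall k, let s := dotv (gbar k) (dx k) + Num.max (quadf (Bt k) (dx k)) 0 in
                 let tprev := prev tau_init tau k in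
                 tau k = if s <= 0 then tprev
                         else let ttr := (1 - sigma) * enorm (c (x k)) / s in
                              if tprev <= ttr then tprev else (1 - eps) * ttr) /\
      (forall k, let ntr := Dq c (dx k) (tau k) (x k) (gbar k) (Bt k) / (enorm (dx k)) ^+ 2 in
                 let nprev := prev nu_init nu k in
                 nu k = if nprev <= ntr then nprev else (1 - eps) * ntr) /\
      (forall k, let a0 := nu k * alpha k / (tau k * kf + kc) in
                 [/\ a0 <= abar k, abar k <= a0 + psi * powR (alpha k) p,
                     x k.+1 = x k + abar k *: dx k &
                     lam k.+1 = lam k + abar k *: dlam k]).

(** The part of Assumption (A1) that is expressible for the data above. *)
Definition A1 (R : realType) (d m : nat) (c : 'cV[R]_d -> 'cV[R]_m)
  (b bt : nat -> R) (D Dt : nat -> 'cV[R]_d) (x : nat -> 'cV[R]_d)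
  (Gt : nat -> 'M[R]_(m, d)) (Bt : nat -> 'M[R]_d)
  (kap_c k1G k2G k1Gt k2Gt k1Bt k2Bt : R) : Prop :=
  (exists X : set 'cV[R]_d,
        [/\ open X, convex_setR X,
            (forall k, [/\ X (x k), X (x k + b k *: D k), X (x k - b k *: D k),
                           X (x k + b k *: D k + bt k *: Dt k)
                         & X (x k - b k *: D k + bt k *: Dt k)])
          & (forall y, X y -> differentiable c y)]) /\
      (0 < kap_c /\ 0 < k1G /\ 0 < k2G /\ 0 < k1Gt /\ 0 < k2Gt /\ 0 < k1Bt /\ 0 < k2Bt) /\
      (forall k, enorm (c (x k)) <= kap_c) /\
      (forall k, loewner_le (k1G%:M) (cjac c (x k) *m (cjac c (x k))^T)
                 /\ loewner_le (cjac c (x k) *m (cjac c (x k))^T) (k2G%:M)) /\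
      (forall k, loewner_le (k1Gt%:M) (Gt k *m (Gt k)^T)
                 /\ loewner_le (Gt k *m (Gt k)^T) (k2Gt%:M)) /\
      (forall k, (forall u : 'cV[R]_d, Gt k *m u = 0 -> k1Bt * (enorm u) ^+ 2 <= quadf (Bt k) u)
                 /\ opnorm_le (Bt k) k2Bt).

(* Main.v *)
Require Import Defs.
From HB Require Import structures.
From mathcomp Require Import all_boot all_order all_algebra.
From mathcomp Require Import all_classical all_reals all_analysis.
From mathcomp Require Import ring lra.
Import Order.TTheory GRing.Theory Num.Theory.
Local Open Scope ring_scope.



Section A1. Variable R : realFieldType.
Lemma arith_b (a k2 ia nu nv ku q : R) : 0 < a -> a * ia = 1 -> 0 <= k2 -> 0 <= nu -> 0 <= nv ->
  ku = (16 * k2^+2 * ia + 4 * k2) * ia + 1 -> ku * nv^+2 <= nu^+2 ->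
  a * nu^+2 - 2 * k2 * nu * nv - k2 * nv^+2 <= q -> 2^-1 * a * nu^+2 <= q.
Proof.
move=> ha hia hk2 hnu hnv hku hh hq.
have h2 : 2 * k2 * nu * nv <= a / 4 * nu^+2 + 4 * k2^+2 * ia * nv^+2.
  rewrite -subr_ge0.
  have -> : a / 4 * nu^+2 + 4 * k2^+2 * ia * nv^+2 - 2 * k2 * nu * nv
     = ia * (a / 2 * nu - 2 * k2 * nv)^+2 + (1 - a * ia) * (a / 4 * nu^+2 - 2 * k2 * nu * nv) by field.
  rewrite hia subrr mul0r addr0; apply: mulr_ge0; last exact: sqr_ge0.
  rewrite -(pmulr_rge0 _ ha) hia; exact: ler01.
have h3 : (4 * k2^+2 * ia + k2) * nv^+2 <= a / 4 * nu^+2.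
  have e : a / 4 * ku = 4 * k2^+2 * ia * (a * ia) + k2 * (a * ia) + a / 4 by rewrite hku; field.
  rewrite hia !mulr1 in e.
  have h4 : a / 4 * (ku * nv^+2) <= a / 4 * nu^+2 by rewrite ler_pM2l //; apply: divr_gt0.
  rewrite mulrA e in h4.
  have h5 : 0 <= a / 4 * nv^+2 by apply: mulr_ge0; [apply: divr_ge0; apply/ltW| exact: sqr_ge0].
  rewrite mulrDl in h4. lra.
set P := 2 * k2 * nu * nv in h2 hq. set Y := 4 * k2 ^+ 2 * ia * nv ^+ 2 in h2.
rewrite (_ : (4 * k2 ^+ 2 * ia + k2) * nv ^+ 2 = Y + k2 * nv^+2) in h3; last by rewrite /Y; field.
set Z := k2 * nv ^+ 2 in h3 hq. set N := nu ^+ 2 in h2 h3 hq *.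
have -> : 2^-1 * a * N = a * N - a / 4 * N - a / 4 * N by field.
set W := a / 4 * N in h2 h3 *. lra.
Qed.
End A1.

Section A. Variable R : realFieldType.
Lemma sq_le (a b : R) : 0 <= a -> 0 <= b -> a ^+ 2 <= b ^+ 2 -> a <= b.
Proof. by move=> ha hb; rewrite ler_pXn2r // nnegrE. Qed.

Lemma arith_a (k1 ik nw nv nc kapc : R) : 0 < k1 -> k1 * ik = 1 -> 0 <= nw -> 0 <= nv -> 0 <= nc ->
  nc <= kapc -> k1 * nw^+2 <= nv^+2 -> nv^+2 <= nw * nc -> nv^+2 <= ik * kapc * nc /\ nv <= (1 + ik) * nc.
Proof.
move=> hk hik hw hv hc hck h1 h2.
have ikp : 0 < ik by rewrite -(pmulr_rgt0 _ hk) hik ltr01.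
have h3 : k1 * nw <= nc.
  have [->|nwp] := eqVneq nw 0; first by rewrite mulr0.
  have nwp' : 0 < nw by rewrite lt_def nwp hw.
  rewrite -(ler_pM2r nwp'); apply: (le_trans (_ : _ <= nv^+2)); [by rewrite -mulrA -expr2 | by rewrite mulrC].
have h4 : k1 * nv^+2 <= nc * nc.
  apply: le_trans (_ : k1 * (nw * nc) <= _); first by rewrite ler_pM2l.
  by rewrite mulrA ler_wpM2r.
have h5 : nv^+2 <= ik * (nc * nc).
  have -> : nv^+2 = ik * (k1 * nv^+2) by rewrite mulrA (mulrC ik) hik mul1r.
  by rewrite ler_pM2l.
split.
  apply: le_trans h5 _; rewrite -mulrA ler_pM2l //; by rewrite ler_wpM2r.
apply: sq_le => //; first by apply: mulr_ge0 => //; lra.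
apply: le_trans h5 _. rewrite exprMn -subr_ge0.
have -> : (1 + ik) ^+ 2 * nc ^+ 2 - ik * (nc * nc) = (1 + ik + ik^+2) * (nc * nc) by rewrite expr2; ring.
apply: mulr_ge0; last exact: mulr_ge0.
have := sqr_ge0 ik; lra.
Qed.

Lemma dq_arith (t gd M nc sig : R) : 0 <= t -> 0 <= M -> 0 <= nc -> sig < 1 ->
  (0 < gd + M -> t * (gd + M) <= (1 - sig) * nc) ->
  sig * nc + t * (2^-1 * M) <= - t * (gd + 2^-1 * M) + nc.
Proof.
move=> ht hM hc hs h.
have -> : - t * (gd + 2^-1 * M) = - (t * (gd + M)) + t * (2^-1 * M) by field.
have [hp|hn] := ltP 0 (gd + M).
  have := h hp; lra.
have : t * (gd + M) <= 0 by rewrite mulr_ge0_le0.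
have : 0 <= (1 - sig) * nc by apply: mulr_ge0 => //; lra.
lra.
Qed.

Lemma arith_c1 (kq t a U V nc sig M ku iku ti : R) : 0 < ku -> ku * iku = 1 -> 0 <= t -> t <= ti ->
  0 <= kq -> 0 <= U -> 0 <= V -> 0 <= nc -> kq * (4 * (1 + iku)) <= a -> kq * ti <= sig ->
  ku * V <= U -> 2^-1 * a * U <= M -> kq * t * (U + V + nc) <= sig * nc + t * (2^-1 * M).
Proof.
move=> hku hiku ht hti hkq hU hV hc h1 h2 h3 h4.
have ikp : 0 < iku by rewrite -(pmulr_rgt0 _ hku) hiku ltr01.
have hV' : V <= iku * U.
  have -> : V = iku * (ku * V) by rewrite mulrA (mulrC iku) hiku mul1r.
  by rewrite ler_pM2l.
have e1 : kq * t * (U + V) <= t * U * (kq * (1 + iku)).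
  have -> : t * U * (kq * (1 + iku)) = kq * t * (U + iku * U) by ring.
  by rewrite ler_wpM2l ?mulr_ge0 // lerD2l.
have e2 : t * U * (kq * (1 + iku)) <= t * U * (a / 4).
  rewrite ler_wpM2l ?mulr_ge0 //. rewrite ler_pdivlMr; last lra. rewrite -mulrA (mulrC _ 4); lra.
have e3 : t * (2^-1 * (2^-1 * a * U)) <= t * (2^-1 * M).
  by rewrite ler_wpM2l // ler_wpM2l //; lra.
have e4 : kq * t * nc <= sig * nc.
  rewrite ler_wpM2r //; apply: le_trans h2; by rewrite ler_wpM2l.
have e5 : t * U * (a / 4) = t * (2^-1 * (2^-1 * a * U)) by field.
have -> : kq * t * (U + V + nc) = kq * t * (U + V) + kq * t * nc by ring.
lra.
Qed.

Lemma arith_c2 (kq t U V nc sig M ku kvv ti : R) : 0 <= t -> t <= ti -> 0 <= kq -> 0 <= U -> 0 <= V ->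
  0 <= nc -> 0 <= M -> 0 <= ku -> 0 <= kvv -> U <= ku * V -> V <= kvv * nc ->
  kq * (ti * ((ku + 1) * kvv + 1)) <= sig -> kq * t * (U + V + nc) <= sig * nc + t * (2^-1 * M).
Proof.
move=> ht hti hkq hU hV hc hM hku hkvv h1 h2 h3.
have e0 : U + V + nc <= ((ku + 1) * kvv + 1) * nc.
  have : (ku + 1) * V <= (ku + 1) * (kvv * nc) by rewrite ler_wpM2l //; lra.
  have -> : ((ku + 1) * kvv + 1) * nc = (ku + 1) * (kvv * nc) + nc by ring.
  have -> : (ku + 1) * V = ku * V + V by ring.
  lra.
have e1 : kq * t * (U + V + nc) <= kq * t * (((ku + 1) * kvv + 1) * nc).
  by rewrite ler_wpM2l ?mulr_ge0.
have e2 : kq * t * (((ku + 1) * kvv + 1) * nc) <= sig * nc.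
  have hk : 0 <= (ku + 1) * kvv + 1 by have := mulr_ge0 (_ : 0 <= ku + 1) hkvv; lra.
  have -> : kq * t * (((ku + 1) * kvv + 1) * nc) = (kq * t * ((ku + 1) * kvv + 1)) * nc by ring.
  rewrite ler_wpM2r //. apply: le_trans h3. rewrite -mulrA ler_wpM2l //.
  by rewrite ler_wpM2r.
have : 0 <= t * (2^-1 * M) by apply: mulr_ge0 => //; lra.
lra.
Qed.
End A.


Section H.
Variables (R : realType) (n : nat).
Implicit Types (u v w : 'cV[R]_n).

Lemma dotvE u v : dotv u v = \sum_i u i 0 * v i 0.
Proof. by rewrite /dotv !mxE; apply: eq_bigr => i _; rewrite mxE. Qed.

Lemma dotvC u v : dotv u v = dotv v u.
Proof. by rewrite !dotvE; apply: eq_bigr => i _; rewrite mulrC. Qed.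

Lemma dotvDr u v w : dotv u (v + w) = dotv u v + dotv u w.
Proof. by rewrite /dotv mulmxDr mxE. Qed.

Lemma dotvDl u v w : dotv (v + w) u = dotv v u + dotv w u.
Proof. by rewrite dotvC dotvDr !(dotvC u). Qed.

Lemma dotvZr a u v : dotv u (a *: v) = a * dotv u v.
Proof. by rewrite /dotv -scalemxAr mxE. Qed.

Lemma dotvZl a u v : dotv (a *: v) u = a * dotv v u.
Proof. by rewrite dotvC dotvZr dotvC. Qed.

Lemma dotv_ge0 u : 0 <= dotv u u.
Proof. rewrite dotvE; apply: sumr_ge0 => i _; rewrite -expr2; exact: sqr_ge0. Qed.

Lemma dotv_eq0 u : dotv u u = 0 -> u = 0.
Proof.
rewrite dotvE => H; apply/matrixP => i j; rewrite (ord1 j) mxE.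
have h0 : forall i : 'I_n, true -> 0 <= u i 0 * u i 0.
  by move=> k _; rewrite -expr2 sqr_ge0.
have := @psumr_eq0P _ _ _ _ h0 H i isT.
by move/eqP; rewrite mulf_eq0 orbb => /eqP.
Qed.

Lemma enorm_ge0 u : 0 <= enorm u.
Proof. exact: sqrtr_ge0. Qed.

Lemma enorm_sq u : enorm u ^+ 2 = dotv u u.
Proof. by rewrite /enorm sqr_sqrtr // dotv_ge0. Qed.


Lemma CS u v : `|dotv u v| <= enorm u * enorm v.
Proof.
set A := dotv u u; set B := dotv v v; set C := dotv u v.
have hA : 0 <= A := dotv_ge0 u. have hB : 0 <= B := dotv_ge0 v.
have key : 0 <= B * (A * B - C ^+ 2).
  have := dotv_ge0 (B *: u + (- C) *: v).
  rewrite !dotvDl !dotvDr !dotvZl !dotvZr (dotvC v u) -/A -/B -/C.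
  move=> h; apply: le_trans h _; rewrite le_eqVlt; apply/orP; left; apply/eqP; ring.
apply: sq_le; rewrite ?normr_ge0 ?mulr_ge0 ?enorm_ge0 //.
rewrite exprMn !enorm_sq -/A -/B real_normK ?num_real //.
have [B0|Bpos] := eqVneq B 0.
  have v0 : v = 0 := dotv_eq0 v B0.
  rewrite /C v0 dotvE big1 ?expr0n /= ?mulr_ge0 // => i _; by rewrite mxE mulr0.
have Bp : 0 < B by rewrite lt_def Bpos hB.
rewrite -subr_ge0; move: key; rewrite pmulr_rge0 //.
Qed.

Lemma dotv_tr (k : nat) (A : 'M[R]_(k, n)) (w : 'cV[R]_k) v :
  dotv (A^T *m w) v = dotv w (A *m v).
Proof. by rewrite /dotv trmx_mul trmxK mulmxA. Qed.

Lemma quadfD (B : 'M[R]_n) u v : quadf B (u + v) =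
  dotv u (B *m u) + dotv u (B *m v) + dotv v (B *m u) + dotv v (B *m v).
Proof. by rewrite /quadf mulmxDr dotvDl !dotvDr !addrA. Qed.

Lemma dotv_scal (k : R) u : dotv u (k%:M *m u) = k * dotv u u.
Proof. by rewrite mul_scalar_mx dotvZr. Qed.
End H.

Section More.
Variable R : realType.

Lemma sq_leR (a b : R) : 0 <= a -> 0 <= b -> a ^+ 2 <= b ^+ 2 -> a <= b.
Proof. by move=> ha hb; rewrite ler_pXn2r // nnegrE. Qed.

Lemma dotv0r (n : nat) (u : 'cV[R]_n) : dotv u 0 = 0.
Proof. by rewrite /dotv mulmx0 mxE. Qed.

Lemma dot_lb (n : nat) (B : 'M[R]_n) (K : R) (u v : 'cV[R]_n) : opnorm_le B K ->
  - (enorm u * (K * enorm v)) <= dotv u (B *m v).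
Proof.
move=> hB.
have h : `|dotv u (B *m v)| <= enorm u * (K * enorm v).
  apply: le_trans (@CS R n u (B *m v)) _.
  by rewrite ler_wpM2l ?(@enorm_ge0 R n) // hB.
by move: h; rewrite ler_norml => /andP[].
Qed.

Lemma tau_step (s nc sig eps tp t : R) : 0 < sig < 1 -> 0 < eps < 1 -> 0 <= nc -> 0 <= tp ->
  t = (if s <= 0 then tp else let ttr := (1 - sig) * nc / s in
        if tp <= ttr then tp else (1 - eps) * ttr) ->
  [/\ 0 <= t, t <= tp & (0 < s -> t * s <= (1 - sig) * nc)].
Proof.
move=> /andP[hs0 hs1] /andP[he0 he1] hc htp ->; cbv zeta.
case: ifP => hs.
  by split => // hp; exfalso; move: hs; rewrite leNgt hp.
have sp : 0 < s by rewrite ltNge hs.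
have ttr0 : 0 <= (1 - sig) * nc / s.
  by apply: divr_ge0; [apply: mulr_ge0 => //; lra | exact: ltW].
case: ifP => htt /=.
  by split => // _; rewrite -ler_pdivlMr.
have htt' : (1 - sig) * nc / s < tp by rewrite ltNge htt.
have h1 : (1 - eps) * ((1 - sig) * nc / s) <= (1 - sig) * nc / s.
  have he : 0 <= eps := ltW he0. have := mulr_ge0 he ttr0. rewrite mulrBl mul1r; lra.
split.
- by apply: mulr_ge0 => //; lra.
- apply: le_trans h1 _; exact: ltW.
- by move=> _; rewrite -ler_pdivlMr //.
Qed.
End More.


Arguments dotvE {R n}. Arguments dotvC {R n}. Arguments dotvDr {R n}. Arguments dotvDl {R n}.
Arguments dotvZr {R n}. Arguments dotvZl {R n}. Arguments dotv_ge0 {R n}. Arguments dotv_eq0 {R n}.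
Arguments enorm_ge0 {R n}. Arguments enorm_sq {R n}. Arguments CS {R n}. Arguments dotv_tr {R n k}.
Arguments quadfD {R n}. Arguments dotv_scal {R n}. Arguments dotv0r {R n}. Arguments dot_lb {R n}.
Arguments tau_step {R}. Arguments arith_a {R k1 ik nw nv nc kapc}. Arguments arith_b {R a k2 ia nu nv ku q}. Arguments dq_arith {R t gd M nc sig}. Arguments arith_c1 {R kq t a U V nc sig M ku iku ti}. Arguments arith_c2 {R kq t U V nc sig M ku kvv ti}.
Theorem lemma3p8 (R : realType) (d m : nat) (Xi : Type)
  (F : Xi -> 'cV[R]_d -> R) (c : 'cV[R]_d -> 'cV[R]_m)
  (x0 : 'cV[R]_d) (lam0 : 'cV[R]_m) (g_init : 'cV[R]_d) (G_init : 'M[R]_(m, d))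
  (tau_init nu_init : R) (b bt alpha beta : nat -> R)
  (sigma eps psi p kf kc : R)
  (xi : nat -> Xi) (D Dt : nat -> 'cV[R]_d)
  (x : nat -> 'cV[R]_d) (lam : nat -> 'cV[R]_m)
  (gbar : nat -> 'cV[R]_d) (Gbar : nat -> 'M[R]_(m, d)) (Bbar : nat -> 'M[R]_d)
  (Gt : nat -> 'M[R]_(m, d)) (Bt : nat -> 'M[R]_d)
  (dx : nat -> 'cV[R]_d) (dlam : nat -> 'cV[R]_m)
  (tau nu abar : nat -> R)
  (kap_c k1G k2G k1Gt k2Gt k1Bt k2Bt : R) :
  DFSSQP_run F c x0 lam0 g_init G_init tau_init nu_init b bt alpha beta
    sigma eps psi p kf kc xi D Dt x lam gbar Gbar Bbar Gt Bt dx dlam tau nu abar ->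
  A1 c b bt D Dt x Gt Bt kap_c k1G k2G k1Gt k2Gt k1Bt k2Bt ->
  exists kv ku kq : R, [/\ 0 < kv, 0 < ku, 0 < kq &
    forall (k : nat) (u v : 'cV[R]_d),
      dx k = u + v -> Gt k *m u = 0 -> (exists w : 'cV[R]_m, v = (Gt k)^T *m w) ->
      [/\ Num.max (enorm v) (enorm v ^+ 2) <= kv * enorm (c (x k)),
          (ku * enorm v ^+ 2 <= enorm u ^+ 2 ->
             2^-1 * k1Bt * enorm u ^+ 2 <= quadf (Bt k) (dx k)) &
          kq * tau k * (enorm (dx k) ^+ 2 + enorm (c (x k)))
            <= Dq c (dx k) (tau k) (x k) (gbar k) (Bt k)]].
Proof.
move=> run hA1.
case: run => [[hsig [heps [hpsi [hp [hkf hkc]]]]] [[ht0 hn0] [hb [hx0 [hD [hg [hBb [hGB [hsys [htau [hnu hstep]]]]]]]]]]].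
case: hA1 => [_ [[hkc0 [hk1G [hk2G [hk1Gt [hk2Gt [hk1B hk2B]]]]]] [hcb [_ [hGt hBt]]]]].
have hs0 : 0 < sigma by case/andP: hsig.
have hs1 : sigma < 1 by case/andP: hsig.
have tprev : forall k, 0 <= Defs.prev tau_init tau k /\ Defs.prev tau_init tau k <= tau_init.
  elim=> [|k [IH1 IH2]]; first by split => //; exact: ltW.
  have [h1 h2 _] := tau_step _ _ _ _ _ _ hsig heps (enorm_ge0 (c (x k))) IH1 (htau k).
  by split => //=; apply: le_trans IH2.
set ik := k1Gt^-1. set kvv := ik * kap_c. set ia := k1Bt^-1.
set ku := (16 * k2Bt^+2 * ia + 4 * k2Bt) * ia + 1.
set iku := ku^-1.
have hik : k1Gt * ik = 1 by rewrite mulfV // gt_eqF.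
have ikp : 0 < ik by rewrite invr_gt0.
have hia : k1Bt * ia = 1 by rewrite mulfV // gt_eqF.
have iap : 0 < ia by rewrite invr_gt0.
have kup : 0 < ku.
  have : 0 <= (16 * k2Bt^+2 * ia + 4 * k2Bt) * ia.
    apply: mulr_ge0; last exact: ltW.
    apply: addr_ge0; apply: mulr_ge0 => //; try lra; try exact: ltW.
    by apply: mulr_ge0; [lra | exact: sqr_ge0].
  rewrite /ku; lra.
have hiku : ku * iku = 1 by rewrite mulfV // gt_eqF.
have ikup : 0 < iku by rewrite invr_gt0.
have kvvp : 0 <= kvv by apply: mulr_ge0; exact: ltW.
set P1 := 4 * (1 + iku). set P3 := tau_init * ((ku + 1) * kvv + 1).
have P1p : 0 < P1 by rewrite /P1; apply: mulr_gt0; lra.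
have P3p : 0 < P3.
  rewrite /P3; apply: mulr_gt0 => //.
  have hk1 : 0 <= ku + 1 by lra.
  have := mulr_ge0 hk1 kvvp; lra.
set kq := Num.min (k1Bt / P1) (Num.min (sigma / tau_init) (sigma / P3)).
have kqp : 0 < kq by rewrite /kq !lt_min !divr_gt0.
have kq1 : kq * P1 <= k1Bt by rewrite -ler_pdivlMr // /kq ge_min lexx.
have kq2 : kq * tau_init <= sigma by rewrite -ler_pdivlMr // /kq !ge_min lexx orbT.
have kq3 : kq * P3 <= sigma by rewrite -ler_pdivlMr // /kq !ge_min lexx !orbT.
exists (1 + ik + kvv), ku, kq; split => //.
  lra.
move=> k u v hdx hu [w hw].
have hGdx : Gt k *m dx k = - c (x k).
  by have := hsys k; rewrite mul_block_col opp_col_mx mul0mx addr0 => /eq_col_mx [_ ->].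
have hGv : Gt k *m v = - c (x k) by rewrite -hGdx hdx mulmxDr hu add0r.
have hV : dotv v v = - dotv w (c (x k)).
  by rewrite {1}hw dotv_tr hGv -scaleN1r dotvZr mulN1r.
have hW : k1Gt * dotv w w <= dotv v v.
  by have := (hGt k).1 w; rewrite dotv_scal -mulmxA -dotv_tr -hw.
have huv : dotv u v = 0 by rewrite hw dotvC dotv_tr hu dotv0r.
have hCS := CS w (c (x k)).
set nc := enorm (c (x k)) in hCS *.
have nc0 : 0 <= nc := enorm_ge0 _.
have hvw : enorm v ^+ 2 <= enorm w * nc.
  rewrite enorm_sq hV. move: hCS; rewrite ler_norml => /andP[h _]; lra.
have hwv : k1Gt * enorm w ^+ 2 <= enorm v ^+ 2 by rewrite !enorm_sq.
have [ha1 ha2] := arith_a hk1Gt hik (enorm_ge0 w) (enorm_ge0 v) nc0 (hcb k) hwv hvw.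
rewrite -/kvv in ha1.
have partb : ku * enorm v ^+ 2 <= enorm u ^+ 2 -> 2^-1 * k1Bt * enorm u ^+ 2 <= quadf (Bt k) (dx k).
  move=> hh. apply: (arith_b hk1B hia (ltW hk2B) (enorm_ge0 u) (enorm_ge0 v) (erefl ku) hh).
  rewrite hdx quadfD.
  have l1 := (hBt k).1 u hu.
  have l2 := dot_lb _ _ u v (hBt k).2.
  have l3 := dot_lb _ _ v u (hBt k).2.
  have l4 := dot_lb _ _ v v (hBt k).2.
  rewrite /quadf in l1. lra.
have [t0 tle tstep] := tau_step _ _ _ _ _ _ hsig heps nc0 (tprev k).1 (htau k).
have tti : tau k <= tau_init := le_trans tle (tprev k).2.
set q := quadf (Bt k) (dx k).
have hM0 : 0 <= Num.max q 0 by rewrite le_max lexx orbT.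
have hDq := dq_arith t0 hM0 nc0 hs1 tstep.
have hdx2 : enorm (dx k) ^+ 2 = enorm u ^+ 2 + enorm v ^+ 2.
  by rewrite !enorm_sq hdx dotvDl !dotvDr huv (dotvC v u) huv addr0 add0r.
split.
- rewrite ge_max; apply/andP; split.
  + apply: le_trans ha2 _; rewrite ler_wpM2r //; lra.
  + apply: le_trans ha1 _; rewrite ler_wpM2r //; lra.
- exact: partb.
- rewrite /Dq; apply: le_trans hDq. rewrite hdx2.
  have [hh|hh] := leP (ku * enorm v ^+ 2) (enorm u ^+ 2).
  + apply: (arith_c1 kup hiku t0 tti (ltW kqp) (sqr_ge0 _) (sqr_ge0 _) nc0 kq1 kq2 hh).
    by apply: le_trans (partb hh) _; rewrite le_max lexx.
  + exact: (arith_c2 t0 tti (ltW kqp) (sqr_ge0 _) (sqr_ge0 _) nc0 hM0 (ltW kup) kvvp (ltW hh) ha1 kq3).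
Qed.
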